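(* Let $N$ be an $r\times r$ indecomposable generalised Cartan matrix, and let $\mathfrak h$, $\alpha_i$, $Z$, $\mathcal A$, $F$, $v_1,\dots,v_r$ be as in the context. If Problem 2 has a solution, then $\ker F=Z$.
   Context: A generalised Cartan matrix is $N=[n(i,j)]_{1\le i,j\le r}$ with $n(i,j)\in\mathbb Z$, $n(i,i)=2$, $n(i,j)\le 0$ for $i\neq j$, and $n(i,j)=0\iff n(j,i)=0$; it is indecomposable if there is no partition of $\{1,\dots,r\}$ into two nonempty sets $I,J$ with $n(i,j)=0$ for all $i\in I,j\in J$. Let $s$ be the corank of $N$, $\mathfrak h$ the complex vector space with basis $H_1,\dots,H_{r+s}$, $\alpha_1,\dots,\alpha_r\in\mathfrak h^*$ linearly independent with $\alpha_j(H_i)=n(i,j)$ for $1\le i,j\le r$, and $Z=\bigcap_i\ker\alpha_i$. $\mathcal A$ is a complex commutative algebra, $\mathrm{Der}(\mathcal A)$ its Lie algebra of derivations; for $a\in\mathcal A$, $D\in\mathrm{Der}(\mathcal A)$, $aD$ is $b\mapsto aD(b)$. $F:\mathfrak h\to\mathrm{Der}(\mathcal A)$ is a Lie algebra homomorphism ($\mathfrak h$ abelian) and $v_1,\dots,v_r\in\mathcal A$ are invertible with $F(H)(v_i)=\alpha_i(H)v_i$ for all $H\in\mathfrak h$. Problem 2 has a solution means: there exist $\delta_1,\dots,\delta_r,\delta_{-1},\dots,\delta_{-r}\in\mathrm{Im}\,F$ such that, with $\mathbf X_i=v_i\delta_i$, $\mathbf X_{-i}=v_i^{-1}\delta_{-i}$,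 one has $[F(H_a),F(H_b)]=0$, $[\mathbf X_i,\mathbf X_{-i}]=F(H_i)$, $[\mathbf X_i,\mathbf X_{-j}]=0$ for $i\neq j$, and $[F(H_a),\mathbf X_{\pm j}]=\pm\alpha_j(H_a)\mathbf X_{\pm j}$. *)

(* Defs.v *)
From HB Require Import structures.
From mathcomp Require Import all_boot all_order all_algebra.
From mathcomp Require Import complex reals.
Set Implicit Arguments. Unset Strict Implicit. Unset Printing Implicit Defensive.
Import Order.TTheory GRing.Theory Num.Theory.
Local Open Scope ring_scope.

Definition gen_cartan (r : nat) (N : 'M[int]_r) : Prop :=
  [/\ forall i, N i i = 2,
      forall i j, i != j -> N i j <= 0 &
      forall i j, N i j = 0 <-> N j i = 0].

Definition indecomposable (r : nat) (N : 'M[int]_r) : Prop :=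
  ~ exists I : {set 'I_r},
      [/\ I != set0, ~: I != set0 &
          forall i j, i \in I -> j \in ~: I -> N i j = 0].

Definition corank (C : fieldType) (r : nat) (N : 'M[int]_r) : nat :=
  (r - \rank (map_mx (fun z : int => z%:~R : C) N))%N.

Definition is_derivation (C : pzRingType) (A : comUnitAlgType C) (D : A -> A) : Prop :=
  (forall (c : C) (x y : A), D (c *: x + y) = c *: D x + D y) /\
  (forall x y : A, D (x * y) = x * D y + D x * y).

Definition opbr (A : zmodType) (P Q : A -> A) : A -> A := fun a => P (Q a) - Q (P a).

Section Problem2.
Variables (C : fieldType) (A : comUnitAlgType C) (r s : nat).
(* h = C^(r+s) with standard basis H_a = delta_mx 0 a;
   alpha is the (r+s) x r matrix with alpha_j(H) = (H *m alpha) 0 j. *)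
Variables (alpha : 'M[C]_(r + s, r)) (F : 'rV[C]_(r + s) -> A -> A) (v : 'I_r -> A).

Definition Hb (a : 'I_(r + s)) : 'rV[C]_(r + s) := delta_mx 0 a.
Definition alphaf (j : 'I_r) (H : 'rV[C]_(r + s)) : C := (H *m alpha) 0 j.

(* delta_i = F (Kp i), delta_{-i} = F (Km i) are elements of Im F. *)
Definition Xp (Kp : 'I_r -> 'rV[C]_(r + s)) (i : 'I_r) : A -> A :=
  fun a => v i * F (Kp i) a.
Definition Xm (Km : 'I_r -> 'rV[C]_(r + s)) (i : 'I_r) : A -> A :=
  fun a => (v i)^-1 * F (Km i) a.

Definition problem2_has_solution : Prop :=
  exists Kp Km : 'I_r -> 'rV[C]_(r + s),
    [/\ forall a b x, opbr (F (Hb a)) (F (Hb b)) x = 0,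
        forall i x, opbr (Xp Kp i) (Xm Km i) x = F (Hb (lshift s i)) x,
        forall i j x, i != j -> opbr (Xp Kp i) (Xm Km j) x = 0,
        forall a j x, opbr (F (Hb a)) (Xp Kp j) x = alphaf j (Hb a) *: Xp Kp j x &
        forall a j x, opbr (F (Hb a)) (Xm Km j) x = - alphaf j (Hb a) *: Xm Km j x].
End Problem2.

(* Main.v *)
Require Import Defs.
From HB Require Import structures.
From mathcomp Require Import all_boot all_order all_algebra.
From mathcomp Require Import complex reals.
From mathcomp Require Import ring zify.
Import Order.TTheory GRing.Theory Num.Theory.
Local Open Scope ring_scope.

Section Der.
Variables (C : fieldType) (A : comUnitAlgType C) (D : A -> A).
Hypothesis HD : is_derivation D.

Lemma self_add (V : zmodType) (x : V) : x = x + x -> x = 0.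
Proof. by move=> H; apply/esym/(addrI x); rewrite addr0 -H. Qed.

Lemma der0 : D 0 = 0.
Proof.
case: HD => Hl _; have := Hl 1 0 0; rewrite !scale1r addr0; exact: self_add.
Qed.

Lemma derD x y : D (x + y) = D x + D y.
Proof. by case: HD => Hl _; have := Hl 1 x y; rewrite !scale1r. Qed.

Lemma derZ c x : D (c *: x) = c *: D x.
Proof. by case: HD => Hl _; rewrite -(addr0 (c *: x)) Hl der0 addr0. Qed.

Lemma derM x y : D (x * y) = x * D y + D x * y.
Proof. by case: HD. Qed.

Lemma der1 : D 1 = 0.
Proof.
have := derM 1 1; rewrite !mul1r !mulr1; exact: self_add.
Qed.

Lemma derV (v : A) (a : C) : v \is a GRing.unit -> D v = a *: v ->
  D v^-1 = - (a *: v^-1).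
Proof.
move=> Hu Hv.
have := derM v v^-1; rewrite divrr // der1 Hv -scalerAl divrr // => /eqP.
rewrite eq_sym addr_eq0 => /eqP H.
have := congr1 (fun z => v^-1 * z) H; rewrite mulrA mulVr // mul1r => ->.
by rewrite mulrN -scalerAr mulr1.
Qed.
End Der.

Lemma unit_scale_eq0 (C : fieldType) (A : comUnitAlgType C) (c : C) (v : A) :
  v \is a GRing.unit -> c *: v = 0 -> c = 0.
Proof.
move=> Hu H; apply/eqP; apply: contraT => Hc.
have : c *: (v * v^-1) = 0 by rewrite scalerAl H mul0r.
rewrite divrr // => H1.
have : c^-1 *: (c *: (1 : A)) = 0 by rewrite H1 scaler0.
by rewrite scalerA mulVf // scale1r => /eqP; rewrite oner_eq0.
Qed.

Lemma opbr_comp (C : fieldType) (A : comUnitAlgType C) (D1 D2 : A -> A) (u w : A) (a1 a2 : C) :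
  is_derivation D1 -> is_derivation D2 -> (forall x, D1 (D2 x) = D2 (D1 x)) ->
  u \is a GRing.unit -> w \is a GRing.unit -> D1 w = a1 *: w -> D2 u = a2 *: u ->
  forall x, opbr (fun y => u * D1 y) (fun y => w^-1 * D2 y) x
            = - (u * w^-1) * (a1 *: D2 x + a2 *: D1 x).
Proof.
move=> H1 H2 Hc Hu Hw Hw1 Hu2 x.
rewrite /opbr (@derM _ _ _ H1) (@derM _ _ _ H2) (@derV _ _ _ H1 _ _ Hw Hw1) Hu2 Hc.
rewrite -(mulr_algl a1 (w^-1)) -(mulr_algl a2 u) -(mulr_algl a1 (D2 x)) -(mulr_algl a2 (D1 x)).
move: (a1%:A) (a2%:A) (w^-1) (D2 x) (D1 x) (D2 (D1 x)) => e1 e2 wi X Z Y; ring.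
Qed.

Section Core.
Variables (C : numClosedFieldType) (A : comUnitAlgType C) (r s : nat).
Variables (N : 'M[int]_r) (alpha : 'M[C]_(r + s, r)).
Variables (F : 'rV[C]_(r + s) -> A -> A) (v : 'I_r -> A) (Kp Km : 'I_r -> 'rV[C]_(r + s)).
Hypothesis HNd : forall i, N i i = 2.
Hypothesis Halpha_N : forall i j, alpha (lshift s i) j = (N i j)%:~R.
Hypothesis HFder : forall H, is_derivation (F H).
Hypothesis HFlin : forall (c : C) H H' x, F (c *: H + H') x = c *: F H x + F H' x.
Hypothesis HFcomm : forall H H' x, F H (F H' x) = F H' (F H x).
Hypothesis Hvunit : forall i, v i \is a GRing.unit.
Hypothesis Hveig : forall H i, F H (v i) = alphaf alpha i H *: v i.
Hypothesis Hs2 : forall i x, opbr (Xp F v Kp i) (Xm F v Km i) x = F (Hb C (lshift s i)) x.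
Hypothesis Hs3 : forall i j x, i != j -> opbr (Xp F v Kp i) (Xm F v Km j) x = 0.

Definition KK (X : 'rV[C]_(r + s)) := forall x, F X x = 0.
Local Notation al := (alphaf alpha).

Lemma FD X Y x : F (X + Y) x = F X x + F Y x.
Proof. by have := HFlin 1 X Y x; rewrite !scale1r. Qed.

Lemma F0 x : F 0 x = 0.
Proof. by apply: self_add; rewrite -FD addr0. Qed.

Lemma FZ c X x : F (c *: X) x = c *: F X x.
Proof. by rewrite -(addr0 (c *: X)) HFlin F0 addr0. Qed.

Lemma KD {X Y} : KK X -> KK Y -> KK (X + Y).
Proof. by move=> HX HY x; rewrite FD HX HY addr0. Qed.

Lemma KZ c {X} : KK X -> KK (c *: X).
Proof. by move=> HX x; rewrite FZ HX scaler0. Qed.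

Lemma K0 : KK 0.
Proof. exact: F0. Qed.

Lemma KN {X} : KK X -> KK (- X).
Proof. by move=> HX; rewrite -scaleN1r; apply: KZ. Qed.

Lemma Ksum (I : finType) (f : I -> 'rV[C]_(r + s)) : (forall i, KK (f i)) -> KK (\sum_i f i).
Proof. by move=> Hf; apply: (big_ind KK) => //; [exact: K0 | exact: (fun X Y => @KD X Y)]. Qed.

Lemma alD j X Y : al j (X + Y) = al j X + al j Y.
Proof. by rewrite /alphaf mulmxDl mxE. Qed.

Lemma alZ j c X : al j (c *: X) = c * al j X.
Proof. by rewrite /alphaf -scalemxAl mxE. Qed.

Lemma alN j X : al j (- X) = - al j X.
Proof. by rewrite -scaleN1r alZ mulN1r. Qed.

Lemma K_al j {X} : KK X -> al j X = 0.
Proof.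
move=> HX; apply: (@unit_scale_eq0 _ _ _ (v j)) => //.
by rewrite -Hveig HX.
Qed.

Lemma al_Hb i j : al j (Hb C (lshift s i)) = (N i j)%:~R.
Proof. by rewrite /alphaf /Hb -rowE mxE Halpha_N. Qed.

Lemma opbrE i j x : opbr (Xp F v Kp i) (Xm F v Km j) x =
  - (v i * (v j)^-1) * F (al j (Kp i) *: Km j + al i (Km j) *: Kp i) x.
Proof.
rewrite HFlin FZ; apply: opbr_comp => //; exact: Hveig.
Qed.

Definition p i := al i (Kp i).
Definition q i := al i (Km i).

Lemma E1 i : KK (Hb C (lshift s i) + p i *: Km i + q i *: Kp i).
Proof.
move=> x; rewrite -addrA FD -Hs2 opbrE divrr // mulN1r.
by rewrite /p /q addNr.
Qed.

Lemma E2 {i j} : i != j -> KK (al j (Kp i) *: Km j + al i (Km j) *: Kp i).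
Proof.
move=> Hij x; have := Hs3 i j x Hij; rewrite opbrE => /eqP.
rewrite mulNr oppr_eq0 => /eqP H.
have Hu : v i * (v j)^-1 \is a GRing.unit by rewrite unitrM Hvunit unitrV Hvunit.
by apply: (mulrI Hu); rewrite H mulr0.
Qed.

Lemma pq i : p i * q i = -1.
Proof.
have := K_al i (E1 i); rewrite !alD !alZ al_Hb HNd -/(p i) -/(q i) => H.
have H2 : (p i * q i + 1) * 2%:R = 0 by rewrite -H; ring.
move/eqP: H2; rewrite mulf_eq0 pnatr_eq0 orbF addr_eq0 => /eqP //.
Qed.

Lemma qp i : q i * p i = -1.
Proof. by rewrite mulrC pq. Qed.

Lemma p_neq0 i : p i != 0.
Proof. by apply/eqP => H; have := pq i; rewrite H mul0r => /eqP; rewrite eq_sym oppr_eq0 oner_eq0. Qed.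

Lemma q_neq0 i : q i != 0.
Proof. by apply/eqP => H; have := pq i; rewrite H mulr0 => /eqP; rewrite eq_sym oppr_eq0 oner_eq0. Qed.

Lemma xy {i j} : i != j -> al j (Kp i) * (q j + al i (Km j)) = 0 /\ al i (Km j) * (al j (Kp i) + p i) = 0.
Proof.
move=> Hij; split; [have := K_al j (E2 Hij) | have := K_al i (E2 Hij)];
  rewrite alD !alZ /p /q => H; rewrite -H; ring.
Qed.

Definition eps i j := (i != j) && (al j (Kp i) != 0).

Lemma eps_irr i : eps i i = false.
Proof. by rewrite /eps eqxx. Qed.

Lemma F12 {i j} : i != j ->
  al j (Kp i) = (if eps i j then - p i else 0) /\ al i (Km j) = (if eps i j then - q j else 0).
Proof.
move=> Hij; have [H1 H2] := xy Hij; rewrite /eps Hij /=.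
case: eqP => [Hx | /eqP Hx] /=.
  split=> //; move/eqP: H2; rewrite Hx add0r mulf_eq0 (negbTE (p_neq0 i)) orbF.
  by move/eqP.
move/eqP: H1; rewrite mulf_eq0 (negbTE Hx) /= addr_eq0 => /eqP Hy.
split; last by rewrite Hy opprK.
move/eqP: H2; rewrite mulf_eq0 => /orP [/eqP Hy0|].
  by move: (q_neq0 j); rewrite Hy Hy0 oppr0 eqxx.
by rewrite addr_eq0 => /eqP.
Qed.

Lemma F5 i k : i != k -> (N i k)%:~R = - ((eps k i)%:R : C) - (eps i k)%:R.
Proof.
move=> Hik; have := K_al k (E1 i); rewrite !alD !alZ al_Hb.
have Hki : k != i by rewrite eq_sym.
have [_ ->] := F12 Hki; have [-> _] := F12 Hik.
move/eqP; rewrite -addrA addr_eq0 => /eqP ->.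
have Hpq := pq i; have Hqp := qp i.
case: (eps k i); case: (eps i k); rewrite /= ?mulrN ?Hpq ?Hqp ?mulr0 ?opprK ?addr0 ?add0r ?oppr0 ?subr0 ?sub0r. all: ring.
Qed.

Lemma F4 {i j k} : eps i j -> k != i -> k != j -> ~~ eps i k && ~~ eps k j.
Proof.
move=> Hij Hki Hkj.
have Hij' : i != j by move: Hij; rewrite /eps => /andP [].
have Hik : i != k by rewrite eq_sym.
have := K_al k (E2 Hij'); rewrite alD !alZ.
have [-> ->] := F12 Hij'; rewrite Hij.
have [_ ->] := F12 Hkj; have [-> _] := F12 Hik.
have Hp := p_neq0 i; have Hq := q_neq0 j.
case: (eps k j); case: (eps i k) => //= /eqP; rewrite ?mulr0 ?addr0 ?add0r.
- have -> : - p i * - q j + - q j * - p i = (p i * q j) * 2%:R by ring.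
  by rewrite mulf_eq0 pnatr_eq0 orbF mulf_eq0 (negbTE Hp) (negbTE Hq).
- by rewrite mulrNN mulf_eq0 (negbTE Hp) (negbTE Hq).
- by rewrite mulrNN mulf_eq0 (negbTE Hp) (negbTE Hq).
Qed.

Lemma Nf i j : (N i j)%:~R = (i == j)%:R * 2%:R - ((eps j i)%:R : C) - (eps i j)%:R.
Proof.
case: (eqVneq i j) => [->|Hij]; first by rewrite HNd eps_irr mul1r !subr0.
by rewrite F5 // mul0r sub0r.
Qed.

Definition outd i : C := \sum_j ((eps i j)%:R : C).
Definition ind j : C := \sum_i ((eps i j)%:R : C).

Lemma outd01 i : outd i = 0 \/ outd i = 1.
Proof.
rewrite /outd; case: (pickP (eps i)) => [j0 Hj0 | H0]; last first.
  by left; rewrite big1 // => j _; rewrite H0.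
right; rewrite (bigD1 j0) //= Hj0 big1 ?addr0 // => j Hj.
case: (eqVneq j i) => [->|Hji]; first by rewrite eps_irr.
by have /andP [/negbTE -> _] := F4 Hj0 Hji Hj.
Qed.

Lemma ind01 j : ind j = 0 \/ ind j = 1.
Proof.
rewrite /ind; case: (pickP (eps^~ j)) => [i0 Hi0 | H0]; last first.
  by left; rewrite big1 // => i _; rewrite H0.
right; rewrite (bigD1 i0) //= Hi0 big1 ?addr0 // => k Hk.
case: (eqVneq k j) => [->|Hkj]; first by rewrite eps_irr.
by have /andP [_ /negbTE ->] := F4 Hi0 Hk Hkj.
Qed.

Lemma dsumD (f g : 'I_r -> 'I_r -> C) :
  \sum_i \sum_j (f i j + g i j) = \sum_i \sum_j f i j + \sum_i \sum_j g i j.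
Proof. by rewrite -big_split; apply: eq_bigr => i _; rewrite big_split. Qed.

Lemma dsumN (f : 'I_r -> 'I_r -> C) : \sum_i \sum_j (- f i j) = - \sum_i \sum_j f i j.
Proof. by rewrite -sumrN; apply: eq_bigr => i _; rewrite sumrN. Qed.

Lemma herm (c : 'I_r -> C) (Hc : forall j, \sum_i c i * (N i j)%:~R = 0) :
  [/\ forall i j, eps i j -> c i = c j, forall i, outd i * c i = c i &
      forall j, ind j * c j = c j].
Proof.
pose n2 := fun z : C => z * z^*.
pose e := fun i j => ((eps i j)%:R : C).
pose x := fun i j => c i * (c j)^*.
have Q0 : \sum_i \sum_j (N i j)%:~R * x i j = 0.
  rewrite exchange_big /= big1 // => j _.
  transitivity (\sum_i c i * (N i j)%:~R * (c j)^*); last by rewrite -mulr_suml Hc mul0r.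
  by apply: eq_bigr => i _; rewrite /x mulrA (mulrC _ (c i)).
have QE : \sum_i \sum_j (N i j)%:~R * x i j = \sum_i (n2 (c i) + n2 (c i))
    - \sum_i \sum_j e i j * x j i - \sum_i \sum_j e i j * x i j.
  have -> : \sum_i \sum_j (N i j)%:~R * x i j = \sum_i \sum_j ((i == j)%:R * 2%:R * x i j + (- (e j i * x i j))
     + (- (e i j * x i j))).
    by apply: eq_bigr => i _; apply: eq_bigr => j _; rewrite Nf /e; ring.
  rewrite !dsumD !dsumN; congr (_ - _ - _); last first.
    by rewrite exchange_big.
  apply: eq_bigr => i _; rewrite (bigD1 i) //= big1 ?addr0; last first.
    by move=> j Hj; rewrite eq_sym (negbTE Hj) !mul0r.
  by rewrite eqxx /x /n2 /= mul1r; ring.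
have T2E : \sum_i (1 - outd i) * n2 (c i) = \sum_i n2 (c i) - \sum_i \sum_j e i j * n2 (c i).
  by rewrite -sumrB; apply: eq_bigr => i _; rewrite mulrBl mul1r /outd mulr_suml.
have T3E : \sum_j (1 - ind j) * n2 (c j) = \sum_i n2 (c i) - \sum_i \sum_j e i j * n2 (c j).
  rewrite [X in _ - X]exchange_big /= -sumrB; apply: eq_bigr => j _.
  by rewrite mulrBl mul1r /ind mulr_suml.
have T1E : \sum_i \sum_j e i j * n2 (c i - c j) = \sum_i \sum_j e i j * n2 (c i)
   + \sum_i \sum_j e i j * n2 (c j) + - \sum_i \sum_j e i j * x i j + - \sum_i \sum_j e i j * x j i.
  rewrite -!dsumN -!dsumD; apply: eq_bigr => i _; apply: eq_bigr => j _.
  by rewrite /n2 /x rmorphB /=; ring.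
have Hsum : \sum_i \sum_j e i j * n2 (c i - c j) + \sum_i (1 - outd i) * n2 (c i)
    + \sum_j (1 - ind j) * n2 (c j) = 0.
  rewrite -[RHS]Q0 T1E T2E T3E QE big_split /=; ring.
have ge1 : forall i j, 0 <= e i j * n2 (c i - c j).
  by move=> i j; apply: mulr_ge0; [exact: ler0n | exact: mul_conjC_ge0].
have ge2 : forall i, 0 <= (1 - outd i) * n2 (c i).
  move=> i; apply: mulr_ge0; last exact: mul_conjC_ge0.
  by case: (outd01 i) => ->; rewrite ?subr0 ?subrr.
have ge3 : forall j, 0 <= (1 - ind j) * n2 (c j).
  move=> j; apply: mulr_ge0; last exact: mul_conjC_ge0.
  by case: (ind01 j) => ->; rewrite ?subr0 ?subrr.
have S1 : 0 <= \sum_i \sum_j e i j * n2 (c i - c j).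
  by apply: sumr_ge0 => i _; apply: sumr_ge0 => j _.
have S2 : 0 <= \sum_i (1 - outd i) * n2 (c i) by apply: sumr_ge0 => i _.
have S3 : 0 <= \sum_j (1 - ind j) * n2 (c j) by apply: sumr_ge0 => i _.
move/eqP: Hsum; rewrite paddr_eq0 ?addr_ge0 // paddr_eq0 // => /andP [/andP [/eqP Z1 /eqP Z2] /eqP Z3].
split.
- move=> i j Hij.
  have ge1' : forall i, true -> 0 <= \sum_j e i j * n2 (c i - c j).
    by move=> k _; apply: sumr_ge0 => l _; exact: ge1.
  have Zi := psumr_eq0P ge1' Z1 (i:=i) isT.
  have := psumr_eq0P (fun j _ => ge1 i j) Zi (i:=j) isT.
  rewrite /e Hij mul1r => /eqP; rewrite /n2 mul_conjC_eq0 subr_eq0 => /eqP //.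
- move=> i; have := psumr_eq0P (fun i _ => ge2 i) Z2 (i:=i) isT.
  move/eqP; rewrite mulf_eq0 => /orP [|]; first by rewrite subr_eq0 => /eqP <-; rewrite mul1r.
  by rewrite /n2 mul_conjC_eq0 => /eqP ->; rewrite mulr0.
- move=> j; have := psumr_eq0P (fun i _ => ge3 i) Z3 (i:=j) isT.
  move/eqP; rewrite mulf_eq0 => /orP [|]; first by rewrite subr_eq0 => /eqP <-; rewrite mul1r.
  by rewrite /n2 mul_conjC_eq0 => /eqP ->; rewrite mulr0.
Qed.

Definition u i := (- q i) *: Kp i.
Definition w i := p i *: Km i.

Lemma Kwu k j : eps k j -> KK (w j - u k).
Proof.
move=> He; have Hkj : k != j by move: He; rewrite /eps => /andP [].
have := KZ (p j * q k) (E2 Hkj); have [-> ->] := F12 Hkj; rewrite He.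
have c1 : p j * q k * - p k = p j by rewrite mulrN -mulrA qp mulrN1 opprK.
have c2 : p j * q k * - q j = q k by rewrite mulrN mulrAC pq mulN1r opprK.
by rewrite scalerDr !scalerA c1 c2 /w /u scaleNr opprK.
Qed.

Lemma zmod_aux (V : zmodType) (h a b : V) : h = h + b + a + (- a - b).
Proof. by rewrite -opprD (addrC a b) -(addrA h) addrK. Qed.

Lemma main_vec (c : 'I_r -> C) (Hc : forall j, \sum_i c i * (N i j)%:~R = 0) :
  KK (\sum_i c i *: Hb C (lshift s i)).
Proof.
have [H1 H2 H3] := herm _ Hc.
have -> : \sum_i c i *: Hb C (lshift s i) =
   \sum_i c i *: (Hb C (lshift s i) + p i *: Km i + q i *: Kp i) + \sum_i c i *: (u i - w i).
  rewrite -big_split; apply: eq_bigr => i _; rewrite /= -scalerDr; congr (_ *: _).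
  by rewrite /u /w scaleNr -zmod_aux.
apply: KD; first by apply: Ksum => i; apply: KZ; exact: E1.
have -> : \sum_i c i *: (u i - w i) =
   \sum_i \sum_j ((eps i j)%:R : C) *: (c i *: u i - c j *: w j).
  transitivity (\sum_i (outd i * c i) *: u i - \sum_j (ind j * c j) *: w j).
    by rewrite -sumrB; apply: eq_bigr => i _; rewrite H2 H3 scalerBr.
  rewrite [X in _ - X](eq_bigr (fun j => \sum_i ((eps i j)%:R : C) *: (c j *: w j))); last first.
    by move=> j _; rewrite /ind mulr_suml scaler_suml; apply: eq_bigr => i _; rewrite scalerA.
  rewrite [X in _ - X]exchange_big /= -sumrB; apply: eq_bigr => i _.
  rewrite /outd mulr_suml scaler_suml -sumrB; apply: eq_bigr => j _.
  by rewrite scalerBr !scalerA.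
apply: Ksum => i; apply: Ksum => j.
case He: (eps i j); last by rewrite scale0r; exact: K0.
rewrite scale1r (H1 _ _ He) -scalerBr -opprB; apply: KZ; apply: KN; exact: Kwu.
Qed.
End Core.

Theorem corollary3p10
  (R : realType) (r : nat) (N : 'M[int]_r)
  (HN : gen_cartan N) (Hind : indecomposable N)
  (A : comUnitAlgType R[i])
  (alpha : 'M[R[i]]_(r + corank R[i] N, r))
  (Halpha_indep : row_free alpha^T)
  (Halpha_N : forall i j : 'I_r, alpha (lshift (corank R[i] N) i) j = (N i j)%:~R)
  (F : 'rV[R[i]]_(r + corank R[i] N) -> A -> A)
  (HFder : forall H, is_derivation (F H))
  (HFlin : forall (c : R[i]) H H' x, F (c *: H + H') x = c *: F H x + F H' x)
  (HFcomm : forall H H' x, F H (F H' x) = F H' (F H x))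
  (v : 'I_r -> A)
  (Hvunit : forall i, v i \is a GRing.unit)
  (Hveig : forall H i, F H (v i) = alphaf alpha i H *: v i)
  (Hsol : problem2_has_solution alpha F v) :
  forall H : 'rV[R[i]]_(r + corank R[i] N),
    (forall x, F H x = 0) <-> (forall j, alphaf alpha j H = 0).
Proof.
move=> H; split.
  move=> HK j; apply: (@unit_scale_eq0 _ _ _ (v j)) => //.
  by rewrite -Hveig HK.
move=> Hal.
case: HN => HNd _ _.
case: Hsol => Kp [Km [_ Hs2 Hs3 _ _]].
pose s := corank R[i] N.
have HA : H *m alpha = 0 by apply/rowP => j; rewrite [RHS]mxE; exact: (Hal j).
pose Nc : 'M[R[i]]_r := usubmx alpha.
pose B := dsubmx alpha.
have NcE : Nc = map_mx (fun z : int => z%:~R : R[i]) N.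
  by apply/matrixP => i j; rewrite !mxE Halpha_N.
have rk_alpha : \rank alpha = r.
  by move: Halpha_indep; rewrite /row_free mxrank_tr => /eqP.
have rk_sum : \rank (Nc + B)%MS = r.
  by rewrite (fst (addsmxE Nc B)) /Nc /B vsubmxK.
have rkB : (\rank B <= s)%N by exact: rank_leq_row.
have rkNc : (\rank Nc + s = r)%N.
  rewrite /s /corank -NcE; have := rank_leq_col Nc; exact: subnKC.
have := mxrank_sum_cap Nc B; rewrite rk_sum => Hcap.
have cap0 : \rank (Nc :&: B)%MS = 0%N by lia.
have freeB : row_free B by rewrite /row_free; apply/eqP; lia.
have HA2 : lsubmx H *m Nc + rsubmx H *m B = 0.
  by rewrite -mul_row_col hsubmxK /Nc /B vsubmxK.
have y0 : rsubmx H *m B = 0.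
  apply/eqP; rewrite -submx0.
  have : (rsubmx H *m B <= Nc :&: B)%MS.
    rewrite sub_capmx submxMl andbT.
    have -> : rsubmx H *m B = (- lsubmx H) *m Nc.
      by rewrite mulNmx; apply/eqP; rewrite -addr_eq0 addrC HA2.
    exact: submxMl.
  move/submx_trans; apply; move/eqP: cap0; rewrite mxrank_eq0 => /eqP ->.
  exact: submx_refl.
have d0 : rsubmx H = 0 by apply/eqP; rewrite -(mulmx_free_eq0 _ freeB) y0.
have cN : lsubmx H *m Nc = 0 by move: HA2; rewrite y0 addr0.
have Hdec : H = \sum_i H 0 (lshift s i) *: Hb R[i] (lshift s i).
  rewrite {1}[H]row_sum_delta big_split_ord /= [X in _ + X]big1 ?addr0 // => j _.
  have : rsubmx H 0 j = 0 by rewrite d0 mxE.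
  by rewrite mxE => ->; rewrite scale0r.
have Hc : forall j, \sum_i H 0 (lshift s i) * (N i j)%:~R = 0.
  move=> j; have E := congr1 (fun M : 'M[R[i]]_(1, r) => M 0 j) cN.
  rewrite /= [RHS]mxE in E; rewrite -[RHS]E mxE.
  by apply: eq_bigr => i _; rewrite !mxE Halpha_N.
move=> x; rewrite Hdec.
exact: (@main_vec _ _ _ _ _ _ _ _ _ _ HNd Halpha_N HFder HFlin HFcomm Hvunit Hveig Hs2 Hs3 _ Hc x).
Qed.
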